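(* For every integer $k\ge 6$, there are infinitely many (pairwise non-isomorphic) $k$-vertex-critical graphs that are simultaneously $2P_2$-free, $(K_3+P_1)$-free and $C_5$-free.
   Context: $\chi(G)$ denotes the chromatic number of $G$. A graph $G$ is $k$-vertex-critical if $\chi(G)=k$ and $\chi(G-v)<k$ for every vertex $v$ of $G$. $2P_2$ is the disjoint union of two copies of the path on two vertices; $K_3+P_1$ is the disjoint union of a triangle and an isolated vertex; $C_5$ is the 5-cycle. A graph is $H$-free if it contains no induced subgraph isomorphic to $H$. *)

(* Defs.v *)
From HB Require Import structures.
From mathcomp Require Import all_boot.
Set Implicit Arguments. Unset Strict Implicit. Unset Printing Implicit Defensive.

Record sgraph := SGraph {
  vert : finType;
  adj : rel vert;
  adj_sym : symmetric adj;
  adj_irrefl : irreflexive adj }.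

Definition colorable_on (G : sgraph) (A : {set vert G}) (c : nat) : Prop :=
  exists f : vert G -> 'I_c,
    forall x y, x \in A -> y \in A -> adj x y -> f x != f y.

Definition colorable (G : sgraph) (c : nat) : Prop := colorable_on [set: vert G] c.

Definition chromatic_number_eq (G : sgraph) (k : nat) : Prop :=
  colorable G k /\ ~ colorable G k.-1.

Definition vertex_critical (G : sgraph) (k : nat) : Prop :=
  chromatic_number_eq G k /\ forall v : vert G, colorable_on [set~ v] k.-1.

Definition induced_sub (H G : sgraph) : Prop :=
  exists phi : vert H -> vert G, injective phi /\
    forall x y, adj (phi x) (phi y) = adj x y.

Definition Hfree (H G : sgraph) : Prop := ~ induced_sub H G.

Definition isomorphic (G1 G2 : sgraph) : Prop :=
  exists phi : vert G1 -> vert G2, bijective phi /\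
    forall x y, adj (phi x) (phi y) = adj x y.

Definition sym_closure n (e : rel 'I_n) : rel 'I_n :=
  fun x y => (x != y) && (e x y || e y x).

Lemma sym_closure_sym n (e : rel 'I_n) : symmetric (sym_closure e).
Proof. by move=> x y; rewrite /sym_closure eq_sym orbC. Qed.

Lemma sym_closure_irr n (e : rel 'I_n) : irreflexive (sym_closure e).
Proof. by move=> x; rewrite /sym_closure eqxx. Qed.

Definition mk_graph n (e : rel 'I_n) : sgraph :=
  SGraph (@sym_closure_sym n e) (@sym_closure_irr n e).

Definition twoP2 : sgraph := mk_graph (fun x y : 'I_4 =>
  ((val x == 0) && (val y == 1)) || ((val x == 2) && (val y == 3))).

Definition K3P1 : sgraph := mk_graph (fun x y : 'I_4 =>
  (val x < 3) && (val y < 3)).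

Definition C5 : sgraph := mk_graph (fun x y : 'I_5 =>
  val y == (val x).+1 %% 5).

(* Main.v *)
Require Import Defs.
From mathcomp Require Import all_boot.
From mathcomp Require Import zify.

Definition absd (x y : nat) := (x - y) + (y - x).
Definition within (n m x y : nat) := (absd x y <= m) || (n <= m + absd x y).
Definition rl (n r c y : nat) :=
  if y + 2*r < c then y + n + 2*r - c
  else if y + 2*r < c + n then y + 2*r - c else y + 2*r - c - n.

Lemma withinP n m x y : within n m x y <-> (absd x y <= m \/ n <= m + absd x y).
Proof. by rewrite /within; split => [/orP|/orP]. Qed.

Lemma within_trans n a b x y z : x < n -> y < n -> z < n ->
  within n a x y -> within n b y z -> within n (a+b) x z.
Proof. move=> ? ? ? /withinP H1 /withinP H2; apply/withinP; rewrite /absd in H1 H2 *; lia. Qed.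

Lemma within_mono n a b x y : a <= b -> within n a x y -> within n b x y.
Proof. move=> ? /withinP H; apply/withinP; lia. Qed.

Lemma rl_bound n r c y : 5*r < n -> c < n -> y < n -> within n (2*r) c y -> rl n r c y <= 4*r.
Proof. move=> ? ? ? /withinP; rewrite /rl /absd; do ?(case: ifP => ?); lia. Qed.

Lemma rl_inj n r c y z : 5*r < n -> c < n -> y < n -> z < n -> rl n r c y = rl n r c z -> y = z.
Proof. move=> ? ? ? ?; rewrite /rl; do ?(case: ifP => ?); lia. Qed.

Lemma withinE n m x y : within n m x y <->
  (x <= y+m /\ y <= x+m) \/ n+y <= m+x \/ n+x <= m+y.
Proof. rewrite /within /absd; split; [move/orP|move=> H; apply/orP]; lia. Qed.
Lemma close_rl n r c y z : 5*r < n -> c < n -> y < n -> z < n ->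
  within n (2*r) c y -> within n (2*r) c z ->
  within n r y z = (absd (rl n r c y) (rl n r c z) <= r).
Proof.
move=> ? ? ? ? /withinE H1 /withinE H2.
have -> : (absd (rl n r c y) (rl n r c z) <= r) = 
  (rl n r c y <= rl n r c z + r) && (rl n r c z <= rl n r c y + r).
  by rewrite /absd; apply/idP/andP; lia.
apply/idP/andP => [/withinE|] H; [| apply/withinE]; move: H H1 H2; rewrite /rl; do ?(case: ifP => ?); lia.
Qed.


Lemma div_eq_close a b d : 0 < d -> a %/ d = b %/ d -> absd a b < d.
Proof.
move=> dp E; rewrite /absd (divn_eq a d) (divn_eq b d) E.
have := ltn_pmod a dp; have := ltn_pmod b dp.
move: (b %/ d * d) (a %% d) (b %% d) => t u w; lia.
Qed.

Lemma within_sym n m x y : within n m x y = within n m y x.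
Proof. by rewrite /within /absd addnC. Qed.
Lemma within_refl n m x : within n m x x.
Proof. by rewrite /within /absd subnn. Qed.
Lemma absd_le X Y r : (absd X Y <= r) = (X <= Y + r) && (Y <= X + r).
Proof. rewrite /absd; apply/idP/andP; lia. Qed.
Lemma within_r2 n r x y : within n r x y -> within n (2*r) x y.
Proof. apply: within_mono; lia. Qed.
Lemma within_tr2 n r x y z : x < n -> y < n -> z < n ->
  within n r x y -> within n r y z -> within n (2*r) x z.
Proof. move=> ? ? ? H1 H2; apply: (@within_mono n (r+r)); [lia|exact: within_trans H1 H2]. Qed.

Arguments within_r2 {n r x y}.
Arguments within_tr2 {n r x y z}.

Lemma noC4 n r a b c d : 5*r < n -> a < n -> b < n -> c < n -> d < n ->
  within n r a c -> within n r c b -> within n r b d -> within n r d a ->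
  ~~ within n r a b -> ~~ within n r c d -> False.
Proof.
move=> hn ha hb hc hd ac cb bd da ab cd.
have wc := within_r2 ac.
have wd : within n (2*r) a d by apply: within_r2; rewrite within_sym.
have wb := within_tr2 ha hc hb ac cb.
have wa : within n (2*r) a a by apply: within_refl.
move: ac cb bd da ab cd.
rewrite !(@close_rl n r a _ _ hn ha) //.
have := rl_bound _ _ _ _ hn ha ha wa; have := rl_bound _ _ _ _ hn ha hb wb;
have := rl_bound _ _ _ _ hn ha hc wc; have := rl_bound _ _ _ _ hn ha hd wd.
rewrite !absd_le.
move: (rl n r a a) (rl n r a b) (rl n r a c) (rl n r a d) => A B C D.
clear; lia.
Qed.

Lemma noC5 n r c0 c1 c2 c3 c4 : 5*r < n -> c0 < n -> c1 < n -> c2 < n -> c3 < n -> c4 < n ->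
  within n r c0 c1 -> within n r c1 c2 -> within n r c2 c3 -> within n r c3 c4 -> within n r c4 c0 ->
  ~~ within n r c0 c2 -> ~~ within n r c0 c3 -> ~~ within n r c1 c3 -> ~~ within n r c1 c4 ->
  ~~ within n r c2 c4 -> False.
Proof.
move=> hn h0 h1 h2 h3 h4 e01 e12 e23 e34 e40 f02 f03 f13 f14 f24.
have w0 : within n (2*r) c0 c0 by apply: within_refl.
have w1 := within_r2 e01.
have e04 : within n r c0 c4 by rewrite within_sym.
have w4 := within_r2 e04.
have w2 := within_tr2 h0 h1 h2 e01 e12.
have e43 : within n r c4 c3 by rewrite within_sym.
have w3 := within_tr2 h0 h4 h3 e04 e43.
move: e01 e12 e23 e34 e40 f02 f03 f13 f14 f24.
rewrite !(@close_rl n r c0 _ _ hn h0) //.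
have := rl_bound _ _ _ _ hn h0 h0 w0; have := rl_bound _ _ _ _ hn h0 h1 w1;
have := rl_bound _ _ _ _ hn h0 h2 w2; have := rl_bound _ _ _ _ hn h0 h3 w3;
have := rl_bound _ _ _ _ hn h0 h4 w4.
rewrite !absd_le.
move: (rl n r c0 c0) (rl n r c0 c1) (rl n r c0 c2) (rl n r c0 c3) (rl n r c0 c4) => A B C D E.
clear; lia.
Qed.

Lemma noClaw n r d a b c : 5*r < n -> a < n -> b < n -> c < n -> d < n ->
  within n r d a -> within n r d b -> within n r d c ->
  ~~ within n r a b -> ~~ within n r a c -> ~~ within n r b c -> False.
Proof.
move=> hn ha hb hc hd da db dc ab ac bc.
have w0 : within n (2*r) d d by apply: within_refl.
have wa := within_r2 da. have wb := within_r2 db. have wc := within_r2 dc.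
move: da db dc ab ac bc.
rewrite !(@close_rl n r d _ _ hn hd) //.
have := rl_bound _ _ _ _ hn hd hd w0; have := rl_bound _ _ _ _ hn hd ha wa;
have := rl_bound _ _ _ _ hn hd hb wb; have := rl_bound _ _ _ _ hn hd hc wc.
rewrite !absd_le.
move: (rl n r d d) (rl n r d a) (rl n r d b) (rl n r d c) => D A B C.
clear; lia.
Qed.


Definition NN K r := K*(r+1)+1.
Definition eG n r : rel 'I_n := fun x y => ~~ within n r x y.
Lemma eG_sym n r : symmetric (eG n r).
Proof. by move=> x y; rewrite /eG within_sym. Qed.
Lemma eG_irr n r : irreflexive (eG n r).
Proof. by move=> x; rewrite /eG within_refl. Qed.
Definition Gr K r : sgraph := SGraph (@eG_sym (NN K r) r) (@eG_irr _ r).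

Lemma Gr_hn K r : 5 <= K -> 5*r < NN K r.
Proof. rewrite /NN; nia. Qed.

Lemma clique n r (hn : 5*r < n) (S : {pred 'I_n})
  (hS : {in S &, forall x y : 'I_n, within n r x y}) : #|S| <= r.+1.
Proof.
case: (pickP S) => [c cS | S0]; last by rewrite eq_card0.
have hc : c < n by [].
have W : forall y, y \in S -> within n (2*r) c y.
  by move=> y yS; apply: within_r2; apply: hS.
case: (arg_minnP (fun y : 'I_n => rl n r c y) cS) => m mS mmin.
pose g (y : 'I_n) : 'I_r.+1 := inord (rl n r c y - rl n r c m).
have cl : forall y, y \in S -> rl n r c y - rl n r c m <= r.
  move=> y yS; have := hS _ _ yS mS.
  rewrite (@close_rl n r c _ _ hn hc) ?W // absd_le.
  move: (rl n r c y) (rl n r c m) => A B; lia.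
rewrite -[r.+1]card_ord; apply: (@leq_card_in _ _ g) => y z yS zS.
rewrite /g => /(congr1 (@nat_of_ord _)); rewrite !inordK ?ltnS ?cl //.
have := mmin _ yS; have := mmin _ zS => h1 h2 E.
apply: val_inj; apply: (rl_inj _ _ _ _ _ hn hc (ltn_ord y) (ltn_ord z)).
move: E h1 h2; move: (rl n r c y) (rl n r c z) (rl n r c m) => A B M; lia.
Qed.


Lemma not_col K r : 5 <= K -> ~ colorable (Gr K r) K.
Proof.
move=> hK [f Hf].
have hn := Gr_hn K r hK.
have cls : forall c : 'I_K, #|[pred x : 'I_(NN K r) | f x == c]| <= r.+1.
  move=> c; apply: clique => // x y; rewrite !inE => /eqP fx /eqP fy.
  apply: negbNE; apply/negP => /(Hf x y (in_setT _) (in_setT _)).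
  by rewrite fx fy eqxx.
have : NN K r <= K * r.+1.
  rewrite -{1}[NN K r]card_ord -sum1_card (partition_big f xpredT) //=.
  rewrite -[K in K * _]card_ord -sum_nat_const; apply: leq_sum => c _.
  apply: leq_trans (cls c); rewrite -sum1_card; by apply: eq_leq; apply: eq_bigl => x; rewrite inE.
by rewrite /NN -[r.+1]addn1 addn1 ltnn.
Qed.

Lemma ltn0Sn' r : 0 < r + 1.
Proof. by rewrite addn1. Qed.

Lemma col K r : colorable (Gr K r) K.+1.
Proof.
exists (fun x : 'I_(NN K r) => insubd (ord0 : 'I_K.+1) (x %/ (r+1))) => x y _ _.
apply: contraL => /eqP E; change (~~ ~~ within (NN K r) r x y); rewrite negbK.
have bd : forall z : 'I_(NN K r), z %/ (r+1) < K.+1.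
  move=> z; rewrite ltn_divLR ?addn1 //; have := ltn_ord z; rewrite /NN; nia.
move: E => /(congr1 val); rewrite insubdK; last exact: bd.
rewrite insubdK; last exact: bd.
move=> /(div_eq_close _ _ _ (ltn0Sn' r)).
rewrite /within /absd => h; apply/orP; left; lia.
Qed.

Definition pos n (v x : nat) := if v < x then x - v - 1 else x + n - v - 1.

Lemma crit K r (v : vert (Gr K.+1 r)) : @colorable_on (Gr K.+1 r) [set~ v] K.+1.
Proof.
exists (fun x : 'I_(NN K.+1 r) => insubd (ord0 : 'I_K.+1) (pos (NN K.+1 r) v x %/ (r+1))).
move=> x y; rewrite !inE => xv yv.
apply: contraL => /eqP E; change (~~ ~~ within (NN K.+1 r) r x y); rewrite negbK.
have bd : forall z : 'I_(NN K.+1 r), z != v -> pos (NN K.+1 r) v z %/ (r+1) < K.+1.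
  move=> z zv; rewrite ltn_divLR ?addn1 //.
  have zv' : nat_of_ord z != nat_of_ord v by [].
  have := ltn_ord z; have := ltn_ord v; move: zv'; rewrite /pos /NN.
  case: ifP => ?; nia.
move: E => /(congr1 val); rewrite insubdK; last exact: bd.
rewrite insubdK; last exact: bd.
move=> /(div_eq_close _ _ _ (ltn0Sn' r)).
have := ltn_ord x; have := ltn_ord y; have := ltn_ord v.
have xv' : nat_of_ord x != nat_of_ord v by []. have yv' : nat_of_ord y != nat_of_ord v by [].
move: xv' yv'; rewrite /within /pos /absd.
do 2 (case: ifP => ?); move=> *; apply/orP; lia.
Qed.


Lemma GrE K r (x y : vert (Gr K r)) : adj x y = ~~ within (NN K r) r x y.
Proof. by []. Qed.

Lemma free2P2 K r : 5 <= K -> Hfree twoP2 (Gr K r).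
Proof.
move=> hK [phi [_ H]].
have hn := Gr_hn K r hK.
pose o (i : nat) (h : i < 4) := @Ordinal 4 i h.
have n02 : within (NN K r) r (phi (o 0 isT)) (phi (o 2 isT)) by apply: negbNE; rewrite -GrE H.
have n21 : within (NN K r) r (phi (o 2 isT)) (phi (o 1 isT)) by apply: negbNE; rewrite -GrE H.
have n13 : within (NN K r) r (phi (o 1 isT)) (phi (o 3 isT)) by apply: negbNE; rewrite -GrE H.
have n30 : within (NN K r) r (phi (o 3 isT)) (phi (o 0 isT)) by apply: negbNE; rewrite -GrE H.
have f01 : ~~ within (NN K r) r (phi (o 0 isT)) (phi (o 1 isT)) by rewrite -GrE H.
have f23 : ~~ within (NN K r) r (phi (o 2 isT)) (phi (o 3 isT)) by rewrite -GrE H.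
exact: (noC4 _ _ _ _ _ _ hn (ltn_ord (phi (o 0 isT))) (ltn_ord (phi (o 1 isT))) (ltn_ord (phi (o 2 isT))) (ltn_ord (phi (o 3 isT))) n02 n21 n13 n30 f01 f23).
Qed.

Lemma freeK3P1 K r : 5 <= K -> Hfree K3P1 (Gr K r).
Proof.
move=> hK [phi [_ H]].
have hn := Gr_hn K r hK.
pose o (i : nat) (h : i < 4) := @Ordinal 4 i h.
have n30 : within (NN K r) r (phi (o 3 isT)) (phi (o 0 isT)) by apply: negbNE; rewrite -GrE H.
have n31 : within (NN K r) r (phi (o 3 isT)) (phi (o 1 isT)) by apply: negbNE; rewrite -GrE H.
have n32 : within (NN K r) r (phi (o 3 isT)) (phi (o 2 isT)) by apply: negbNE; rewrite -GrE H.
have f01 : ~~ within (NN K r) r (phi (o 0 isT)) (phi (o 1 isT)) by rewrite -GrE H.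
have f02 : ~~ within (NN K r) r (phi (o 0 isT)) (phi (o 2 isT)) by rewrite -GrE H.
have f12 : ~~ within (NN K r) r (phi (o 1 isT)) (phi (o 2 isT)) by rewrite -GrE H.
exact: (noClaw _ _ _ _ _ _ hn (ltn_ord (phi (o 0 isT))) (ltn_ord (phi (o 1 isT))) (ltn_ord (phi (o 2 isT))) (ltn_ord (phi (o 3 isT))) n30 n31 n32 f01 f02 f12).
Qed.

Lemma freeC5 K r : 5 <= K -> Hfree C5 (Gr K r).
Proof.
move=> hK [phi [_ H]].
have hn := Gr_hn K r hK.
pose o (i : nat) (h : i < 5) := @Ordinal 5 i h.
have n02 : within (NN K r) r (phi (o 0 isT)) (phi (o 2 isT)) by apply: negbNE; rewrite -GrE H.
have n24 : within (NN K r) r (phi (o 2 isT)) (phi (o 4 isT)) by apply: negbNE; rewrite -GrE H.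
have n41 : within (NN K r) r (phi (o 4 isT)) (phi (o 1 isT)) by apply: negbNE; rewrite -GrE H.
have n13 : within (NN K r) r (phi (o 1 isT)) (phi (o 3 isT)) by apply: negbNE; rewrite -GrE H.
have n30 : within (NN K r) r (phi (o 3 isT)) (phi (o 0 isT)) by apply: negbNE; rewrite -GrE H.
have f04 : ~~ within (NN K r) r (phi (o 0 isT)) (phi (o 4 isT)) by rewrite -GrE H.
have f01 : ~~ within (NN K r) r (phi (o 0 isT)) (phi (o 1 isT)) by rewrite -GrE H.
have f21 : ~~ within (NN K r) r (phi (o 2 isT)) (phi (o 1 isT)) by rewrite -GrE H.
have f23 : ~~ within (NN K r) r (phi (o 2 isT)) (phi (o 3 isT)) by rewrite -GrE H.
have f43 : ~~ within (NN K r) r (phi (o 4 isT)) (phi (o 3 isT)) by rewrite -GrE H.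
exact: (noC5 _ _ _ _ _ _ _ hn (ltn_ord (phi (o 0 isT))) (ltn_ord (phi (o 2 isT))) (ltn_ord (phi (o 4 isT))) (ltn_ord (phi (o 1 isT))) (ltn_ord (phi (o 3 isT))) n02 n24 n41 n13 n30 f04 f01 f21 f23 f43).
Qed.



Theorem theorem2p7 (k : nat) : 6 <= k ->
  exists G : nat -> sgraph,
    (forall i, vertex_critical (G i) k /\ Hfree twoP2 (G i) /\
               Hfree K3P1 (G i) /\ Hfree C5 (G i)) /\
    (forall i j, i <> j -> ~ isomorphic (G i) (G j)).
Proof.
case: k => [|[|K]] // hk.
have hK : 5 <= K.+1 by [].
exists (fun i => Gr K.+1 i); split.
  move=> i; split; last split; last split.
  - split; last by move=> v; apply: crit.
    by split; [apply: col | apply: not_col].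
  - exact: free2P2.
  - exact: freeK3P1.
  - exact: freeC5.
move=> i j ij [phi [bphi _]]; have := bij_eq_card bphi.
rewrite !card_ord /NN => E; apply: ij; nia.
Qed.
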